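(* Let $R$ be a multiplication ring with finitely many minimal prime ideals and let $M$ be a multiplication $R$-module. Then: (1) the endomorphism ring $\mathrm{End}_R(M)$ is a multiplication ring; (2) $\mathrm{End}_R(M)\cong R/\mathrm{ann}_R(M)$; (3) $M$ is a faithful multiplication $\mathrm{End}_R(M)$-module.
   Context: All rings are commutative with $1$ and all modules are unital. A ring $R$ is a multiplication ring if whenever $I,J$ are ideals of $R$ with $J\subseteq I$, there is an ideal $I'$ of $R$ with $J=I'I$. An $R$-module $M$ is a multiplication module if every submodule of $M$ equals $IM$ for some ideal $I$ of $R$. $\mathrm{ann}_R(M)=\{r\in R: rM=0\}$; a module is faithful if its annihilator is zero. *)

(* Defs.v *)
From HB Require Import structures.
From mathcomp Require Import all_boot all_order all_algebra.
From mathcomp Require Import boolp.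
From Stdlib Require Import FunctionalExtensionality ProofIrrelevance.

Set Implicit Arguments.
Unset Strict Implicit.
Unset Printing Implicit Defensive.

Import GRing.Theory.
Local Open Scope ring_scope.

Section Ideals.
Variable R : pzRingType.

Definition is_ideal (I : R -> Prop) : Prop :=
  [/\ I 0,
      (forall x y, I x -> I y -> I (x + y)),
      (forall r x, I x -> I (r * x)) &
      (forall r x, I x -> I (x * r))].

Definition ideal_mul (I J : R -> Prop) : R -> Prop :=
  fun x => forall K : R -> Prop, is_ideal K ->
    (forall a b, I a -> J b -> K (a * b)) -> K x.

Definition multiplication_ring : Prop :=
  forall I J : R -> Prop, is_ideal I -> is_ideal J ->
    (forall x, J x -> I x) ->
    exists I' : R -> Prop, is_ideal I' /\ (forall x, J x <-> ideal_mul I' I x).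

Definition prime_ideal (P : R -> Prop) : Prop :=
  [/\ is_ideal P, ~ P 1 & forall a b, P (a * b) -> P a \/ P b].

Definition minimal_prime (P : R -> Prop) : Prop :=
  prime_ideal P /\
  forall Q : R -> Prop, prime_ideal Q -> (forall x, Q x -> P x) ->
    forall x, P x -> Q x.

Definition finitely_many_minimal_primes : Prop :=
  exists (n : nat) (Ps : nat -> R -> Prop),
    forall P, minimal_prime P ->
      exists i, (i < n)%N /\ forall x, P x <-> Ps i x.

End Ideals.

Section Modules.
Variables (R : pzRingType) (V : lmodType R).

Definition is_submodule (N : V -> Prop) : Prop :=
  [/\ N 0,
      (forall x y, N x -> N y -> N (x + y)) &
      (forall (r : R) x, N x -> N (r *: x))].

Definition ideal_smul (I : R -> Prop) : V -> Prop :=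
  fun m => forall N : V -> Prop, is_submodule N ->
    (forall r v, I r -> N (r *: v)) -> N m.

Definition multiplication_module : Prop :=
  forall N : V -> Prop, is_submodule N ->
    exists I : R -> Prop, is_ideal I /\ (forall m, N m <-> ideal_smul I m).

Definition ann : R -> Prop := fun r => forall v : V, r *: v = 0.

Definition faithful : Prop := forall r : R, ann r -> r = 0.

End Modules.

(* S ≅ R / I, expressed via the first isomorphism theorem: there is a
   surjective ring morphism R -> S whose kernel is exactly I. *)
Definition iso_to_quotient (R S : pzRingType) (I : R -> Prop) : Prop :=
  exists f : {rmorphism R -> S},
    (forall s : S, exists r : R, f r = s) /\ (forall r, f r = 0 <-> I r).

Section Endo.
Variables (R : comPzRingType) (M : lmodType R).

Record endo := Endo {
  efun :> M -> M;
  efunD : forall x y, efun (x + y) = efun x + efun y;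
  efunZ : forall (r : R) x, efun (r *: x) = r *: efun x }.

Lemma endo_ext (f g : endo) : (forall x, f x = g x) -> f = g.
Proof.
case: f => f fD fZ; case: g => g gD gZ /= H.
have E : f = g by apply: functional_extensionality.
subst g; congr Endo; apply: proof_irrelevance.
Qed.

Definition endo_zero : endo.
Proof. refine (@Endo (fun _ => 0) _ _); by move=> *; rewrite ?addr0 ?scaler0. Defined.

Definition endo_add (f g : endo) : endo.
Proof.
refine (@Endo (fun x => f x + g x) _ _).
- by move=> x y; rewrite !efunD addrACA.
- by move=> r x; rewrite !efunZ scalerDr.
Defined.

Definition endo_opp (f : endo) : endo.
Proof.
refine (@Endo (fun x => - f x) _ _).
- by move=> x y; rewrite efunD opprD.
- by move=> r x; rewrite efunZ scalerN.
Defined.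

Definition endo_one : endo.
Proof. by refine (@Endo id _ _). Defined.

Definition endo_mul (f g : endo) : endo.
Proof.
refine (@Endo (fun x => f (g x)) _ _).
- by move=> x y; rewrite !efunD.
- by move=> r x; rewrite !efunZ.
Defined.

Definition End_R : Type := endo.

HB.instance Definition _ := gen_eqMixin End_R.
HB.instance Definition _ := gen_choiceMixin End_R.

Lemma endo_addA : associative (endo_add : End_R -> _ -> _).
Proof. by move=> f g h; apply: endo_ext => x /=; rewrite addrA. Qed.
Lemma endo_addC : commutative (endo_add : End_R -> _ -> _).
Proof. by move=> f g; apply: endo_ext => x /=; rewrite addrC. Qed.
Lemma endo_add0 : left_id (endo_zero : End_R) endo_add.
Proof. by move=> f; apply: endo_ext => x /=; rewrite add0r. Qed.
Lemma endo_addN : left_inverse (endo_zero : End_R) endo_opp endo_add.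
Proof. by move=> f; apply: endo_ext => x /=; rewrite addNr. Qed.

HB.instance Definition _ :=
  GRing.isZmodule.Build End_R endo_addA endo_addC endo_add0 endo_addN.

Definition endo_mulE : End_R -> End_R -> End_R := endo_mul.
Lemma endo_mulA : associative endo_mulE.
Proof. by move=> f g h; apply: endo_ext. Qed.
Lemma endo_mul1 : left_id (endo_one : End_R) endo_mulE.
Proof. by move=> f; apply: endo_ext. Qed.
Lemma endo_mulr1 : right_id (endo_one : End_R) endo_mulE.
Proof. by move=> f; apply: endo_ext. Qed.
Lemma endo_mulDl : left_distributive endo_mulE (@GRing.add End_R).
Proof. by move=> f g h; apply: endo_ext. Qed.
Lemma endo_mulDr : right_distributive endo_mulE (@GRing.add End_R).
Proof. by move=> f g h; apply: endo_ext => x /=; rewrite /endo_mulE /= efunD. Qed.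

HB.instance Definition _ := GRing.Zmodule_isPzRing.Build End_R
  endo_mulA endo_mul1 endo_mulr1 endo_mulDl endo_mulDr.

(* M regarded as a (left) End_R(M)-module via evaluation: f . m := f m. *)
Definition M_over_End : Type := M.
HB.instance Definition _ := GRing.Zmodule.on M_over_End.

Definition evalEnd (f : End_R) (m : M_over_End) : M_over_End := efun f m.

Lemma evalEndA (f g : End_R) (m : M_over_End) :
  evalEnd f (evalEnd g m) = evalEnd (f * g) m.
Proof. by []. Qed.
Lemma evalEnd1 : left_id (1 : End_R) evalEnd.
Proof. by []. Qed.
Lemma evalEndDr : right_distributive evalEnd +%R.
Proof. by move=> f x y; rewrite /evalEnd efunD. Qed.
Lemma evalEndDl (m : M_over_End) :
  {morph evalEnd^~ m : f g / f + g}.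
Proof. by []. Qed.

HB.instance Definition _ := GRing.Zmodule_isLmodule.Build End_R M_over_End
  evalEndA evalEnd1 evalEndDr evalEndDl.

End Endo.

(* Main.v *)
Require Import Defs.
From HB Require Import structures.
From mathcomp Require Import all_boot all_order all_algebra.
From mathcomp Require Import boolp classical_sets.
From mathcomp Require Import ring.
From Stdlib Require Import Classical.

Set Implicit Arguments.
Unset Strict Implicit.
Unset Printing Implicit Defensive.
Import GRing.Theory.
Local Open Scope ring_scope.


Definition sub (T : Type) (I J : T -> Prop) := forall x, I x -> J x.

Section GenIdeal.
Variable R : pzRingType.
Implicit Types I J A B P Q X Y : R -> Prop.

Lemma ideal_mul_ideal I J : is_ideal (ideal_mul I J).
Proof.
split.
- by move=> K [K0 _ _ _] _.
- move=> x y Hx Hy K HK Hp; case: (HK) => _ KD _ _; apply: KD; [exact: Hx | exact: Hy].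
- move=> r x Hx K HK Hp; case: (HK) => _ _ KM _; apply: KM; exact: Hx.
- move=> r x Hx K HK Hp; case: (HK) => _ _ _ KM; apply: KM; exact: Hx.
Qed.

Lemma ideal_mul_prod I J a b : I a -> J b -> ideal_mul I J (a * b).
Proof. by move=> Ha Hb K _ Hp; apply: Hp. Qed.

Lemma ideal_mul_min I J K : is_ideal K ->
  (forall a b, I a -> J b -> K (a * b)) -> sub (ideal_mul I J) K.
Proof. by move=> HK Hp x Hx; apply: Hx. Qed.

End GenIdeal.

Section GenMod.
Variables (R : pzRingType) (V : lmodType R).

Lemma smul_submodule (I : R -> Prop) : is_submodule (@ideal_smul _ V I).
Proof.
split.
- by move=> N [N0 _ _] _.
- move=> x y Hx Hy N HN Hg; have [_ D _] := HN; apply: D; [exact: Hx | exact: Hy].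
- move=> r x Hx N HN Hg; have [_ _ Z] := HN; apply: Z; exact: Hx.
Qed.

Lemma smul_gen (I : R -> Prop) r (v : V) : I r -> ideal_smul I (r *: v).
Proof. by move=> Ir N _ H; apply: H. Qed.

End GenMod.

Section RingLemmas.
Variable R : comPzRingType.
Implicit Types I J A B P Q X Y : R -> Prop.

Definition Kp P : R -> Prop := fun r => exists w, ~ P w /\ w * r = 0.
Definition prin (p : R) : R -> Prop := fun x => exists r, x = r * p.
Definition isum A B : R -> Prop := fun x => exists a b, [/\ A a, B b & x = a + b].

Lemma ideal_mul_mono I I' J J' : sub I I' -> sub J J' ->
  sub (ideal_mul I J) (ideal_mul I' J').
Proof.
move=> HI HJ; apply: ideal_mul_min; first exact: ideal_mul_ideal.
by move=> a b Ha Hb; apply: ideal_mul_prod; [apply: HI | apply: HJ].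
Qed.

Lemma ideal_mul_assoc Y P A :
  sub (ideal_mul Y (ideal_mul P A)) (ideal_mul (ideal_mul Y P) A).
Proof.
have HK := ideal_mul_ideal (ideal_mul Y P) A.
apply: ideal_mul_min => // y z Hy Hz.
pose K' := fun z => ideal_mul (ideal_mul Y P) A (y * z).
have HK' : is_ideal K'.
  case: HK => K0 KD KL KR; split; rewrite /K'.
  - by rewrite mulr0.
  - by move=> u v Hu Hv; rewrite mulrDr; apply: KD.
  - by move=> r u Hu; rewrite mulrCA; apply: KL.
  - by move=> r u Hu; rewrite mulrA; apply: KR.
apply: (ideal_mul_min HK' _ Hz) => p a Hp Ha; rewrite /K' mulrA.
by apply: ideal_mul_prod => //; apply: ideal_mul_prod.
Qed.

Lemma ideal_mul_subl I J : is_ideal I -> sub (ideal_mul I J) I.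
Proof. move=> HI; apply: ideal_mul_min => // a b Ha _; case: HI => _ _ _ H; exact: H. Qed.

Lemma ideal_mul_subr I J : is_ideal J -> sub (ideal_mul I J) J.
Proof. move=> HJ; apply: ideal_mul_min => // a b _ Hb; case: HJ => _ _ H _; exact: H. Qed.

Lemma prin_ideal p : is_ideal (prin p).
Proof.
split.
- by exists 0; rewrite mul0r.
- by move=> x y [r ->] [s ->]; exists (r + s); rewrite mulrDl.
- by move=> r x [s ->]; exists (r * s); rewrite mulrA.
- by move=> r x [s ->]; exists (s * r); rewrite mulrAC.
Qed.

Lemma prin_self p : prin p p.
Proof. by exists 1; rewrite mul1r. Qed.

Lemma prin_sub I p : is_ideal I -> I p -> sub (prin p) I.
Proof. by case=> _ _ H _ Hp x [r ->]; apply: H. Qed.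

Lemma mul_prin A p : is_ideal A ->
  sub (ideal_mul (prin p) A) (fun x => exists2 a, A a & x = a * p).
Proof.
move=> [A0 AD AL AR]; apply: ideal_mul_min.
  split.
  - by exists 0; rewrite ?mul0r.
  - by move=> x y [a Ha ->] [b Hb ->]; exists (a + b); [apply: AD|rewrite mulrDl].
  - by move=> r x [a Ha ->]; exists (r * a); [apply: AL|rewrite mulrA].
  - by move=> r x [a Ha ->]; exists (a * r); [apply: AR|rewrite mulrAC].
by move=> x a [r ->] Ha; exists (r * a); [apply: AL|rewrite mulrAC].
Qed.

Lemma idem_lemma B A : multiplication_ring R -> is_ideal B -> is_ideal A ->
  sub B (ideal_mul B A) -> forall p, B p -> exists2 a, A a & p = a * p.
Proof.
move=> HR HB HA HBA p Hp.
have [Y [HY EY]] := HR B (prin p) HB (prin_ideal p) (prin_sub HB Hp).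
have h1 : ideal_mul Y B p by apply/EY/prin_self.
have h2 : ideal_mul Y (ideal_mul B A) p by apply: (ideal_mul_mono _ HBA h1).
have h3 := ideal_mul_assoc h2.
have h4 : ideal_mul (prin p) A p.
  by apply: (ideal_mul_mono _ _ h3) => // x /EY.
exact: mul_prin h4.
Qed.

Lemma isum_ideal A B : is_ideal A -> is_ideal B -> is_ideal (isum A B).
Proof.
move=> [A0 AD AL AR] [B0 BD BL BR]; split.
- by exists 0, 0; rewrite addr0.
- move=> x y [a [b [Ha Hb ->]]] [a' [b' [Ha' Hb' ->]]].
  by exists (a + a'), (b + b'); split; [apply: AD|apply: BD|rewrite addrACA].
- move=> r x [a [b [Ha Hb ->]]]; exists (r * a), (r * b).
  by split; [apply: AL|apply: BL|rewrite mulrDr].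
- move=> r x [a [b [Ha Hb ->]]]; exists (a * r), (b * r).
  by split; [apply: AR|apply: BR|rewrite mulrDl].
Qed.

Lemma isum_l A B : is_ideal B -> sub A (isum A B).
Proof. by case=> B0 _ _ _ x Hx; exists x, 0; rewrite addr0. Qed.
Lemma isum_r A B : is_ideal A -> sub B (isum A B).
Proof. by case=> A0 _ _ _ x Hx; exists 0, x; rewrite add0r. Qed.

Lemma M1 P A a : multiplication_ring R -> prime_ideal P -> is_ideal A ->
  sub P A -> A a -> ~ P a -> forall p, P p -> exists2 a', A a' & p = a' * p.
Proof.
move=> HR [HP P1 Pm] HA PA Aa Pa.
have [X [HX EX]] := HR A P HA HP PA.
apply: idem_lemma => //.
have XP : sub X P.
  move=> x Hx; have : P (x * a) by apply/EX; apply: ideal_mul_prod.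
  by case/Pm => // /Pa.
by move=> x /EX; apply: ideal_mul_mono.
Qed.

Lemma ideal_sub1 I x : is_ideal I -> I 1 -> I x.
Proof. by case=> _ _ _ H H1; rewrite -(mul1r x); apply: H. Qed.

Lemma ideal_subB I x y : is_ideal I -> I x -> I y -> I (x - y).
Proof.
case=> _ D L _ Hx Hy; apply: D => //.
by rewrite -mulN1r; apply: L.
Qed.

Lemma ideal_1B I a : is_ideal I -> ~ I 1 -> I a -> ~ I (1 - a).
Proof.
move=> HI N1 Ha H; apply: N1.
case: HI => _ D _ _; have := D _ _ H Ha.
by rewrite subrK.
Qed.

Lemma chain P1 P2 Q : multiplication_ring R -> prime_ideal P1 -> prime_ideal P2 ->
  is_ideal Q -> ~ Q 1 -> sub P1 Q -> sub P2 Q -> sub P1 P2 \/ sub P2 P1.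
Proof.
move=> HR HP1 HP2 HQ Q1 P1Q P2Q.
case: (classic (sub P1 P2)) => [h|h]; [by left|right].
have [x [Px Nx]] : exists x, P1 x /\ ~ P2 x.
  apply: NNPP => H; apply: h => y Py; apply: NNPP => Ny; apply: H; by exists y.
have [I1 _ _] := HP1; have [I2 _ _] := HP2.
have HA := isum_ideal I1 I2.
have AQ : sub (isum P1 P2) Q.
  move=> z [a [b [Ha Hb ->]]]; case: HQ => _ D _ _; apply: D; auto.
move=> p Hp.
have [a Ha Ep] := M1 HR HP2 HA (isum_r I1) (isum_l I2 Px) Nx Hp.
have e : (1 - a) * p = 0 by rewrite mulrBl mul1r -Ep subrr.
case: HP1 => _ _ Pm.
have : P1 ((1 - a) * p) by rewrite e; case: I1.
case/Pm => // H; exfalso; apply: (ideal_1B HQ Q1 (AQ _ Ha)); exact: P1Q.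
Qed.

End RingLemmas.


Section RingLemmas2.
Variable R : comPzRingType.
Implicit Types I J A B P Q X Y S : R -> Prop.

Lemma zorn_ideal S I : S 1 -> is_ideal I -> (forall s, S s -> ~ I s) ->
  exists Q, [/\ is_ideal Q, sub I Q, (forall s, S s -> ~ Q s) &
     forall a, ~ Q a -> exists s q r, [/\ S s, Q q & s = q + r * a]].
Proof.
move=> S1 HI IS.
pose P' := fun X : set R => X = set0 \/ [/\ is_ideal X, sub I X & forall s, S s -> ~ X s].
have [A [PA Amax]] : exists A, P' A /\ forall B, (A `<` B)%classic -> ~ P' B.
  apply: Zorn_bigcup => F FP Ftot.
  have memb X x : F X -> X x -> [/\ is_ideal X, sub I X & forall s, S s -> ~ X s].
    move=> FX Xx; case: (FP X FX) => // E; by rewrite E in Xx.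
  case: (classic (exists X, F X /\ X 0)) => [[X0 [FX0 X00]]|N].
  - right; have [HX0 IX0 _] := memb _ _ FX0 X00; split.
    + split.
      * by exists X0.
      * move=> x y [X1 FX1 Hx] [X2 FX2 Hy].
        case: (Ftot X1 X2 FX1 FX2) => h.
        -- exists X2 => //; have [[_ D _ _] _ _] := memb _ _ FX2 Hy; apply: D => //; exact: h.
        -- exists X1 => //; have [[_ D _ _] _ _] := memb _ _ FX1 Hx; apply: D => //; exact: h.
      * move=> r x [X1 FX1 Hx]; exists X1 => //.
        by have [[_ _ L _] _ _] := memb _ _ FX1 Hx; apply: L.
      * move=> r x [X1 FX1 Hx]; exists X1 => //.
        by have [[_ _ _ L] _ _] := memb _ _ FX1 Hx; apply: L.
    + by move=> x Ix; exists X0 => //; apply: IX0.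
    + by move=> s Ss [X1 FX1 Hs]; have [_ _ h] := memb _ _ FX1 Hs; exact: h Ss Hs.
  - left; apply: funext => x; apply: propext; split => //= -[X FX Xx].
    have [[X0' _ _ _] _ _] := memb _ _ FX Xx; apply: N; by exists X.
case: PA => [EA|[HA IA AS]].
  exfalso; apply: (Amax I); last by right; split; [exact: HI| move=> x|exact: IS].
  rewrite EA; split => // h; have [I0 _ _ _] := HI; exact: h _ I0.
exists A; split => // a Aa; apply: NNPP => H.
pose B := fun x => exists q r, A q /\ x = q + r * a.
have AB : (A `<` B)%classic.
  split.
  - by move=> x Ax; exists x, 0; rewrite mul0r addr0.
  - move=> h; apply: Aa; apply: h; exists 0, 1; rewrite mul1r add0r; split => //.
    by case: HA.
apply: (Amax B AB).
right; case: HA => A0 AD AL AR; split.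
- split.
  + by exists 0, 0; rewrite mul0r addr0.
  + move=> x y [q [r [Hq ->]]] [q' [r' [Hq' ->]]]; exists (q + q'), (r + r').
    by split; [apply: AD | rewrite mulrDl addrACA].
  + move=> c x [q [r [Hq ->]]]; exists (c * q), (c * r).
    by split; [apply: AL | rewrite mulrDr mulrA].
  + move=> c x [q [r [Hq ->]]]; exists (q * c), (r * c).
    by split; [apply: AR | rewrite mulrDl mulrAC].
- by move=> x Ix; exists x, 0; rewrite mul0r addr0; split => //; apply: IA.
- move=> s Ss [q [r [Hq Es]]]; apply: H; exists s, q, r; split => //.
Qed.

Lemma max_prime S Q : (forall a b, S a -> S b -> S (a * b)) -> S 1 -> is_ideal Q ->
  (forall s, S s -> ~ Q s) ->
  (forall a, ~ Q a -> exists s q r, [/\ S s, Q q & s = q + r * a]) -> prime_ideal Q.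
Proof.
move=> SM S1 HQ QS Qmax; split => // [|a b Hab]; first exact: QS.
apply: NNPP => H.
have Na : ~ Q a by move=> h; apply: H; left.
have Nb : ~ Q b by move=> h; apply: H; right.
have [s1 [q1 [r1 [Ss1 Hq1 E1]]]] := Qmax _ Na.
have [s2 [q2 [r2 [Ss2 Hq2 E2]]]] := Qmax _ Nb.
apply: (QS _ (SM _ _ Ss1 Ss2)).
have -> : s1 * s2 = q1 * (q2 + r2 * b) + q2 * (r1 * a) + (r1 * r2) * (a * b).
  by rewrite E1 E2; ring.
have [Q0 QD QL QR] := HQ.
apply: (QD); first apply: (QD).
- exact: QR.
- exact: QR.
- exact: QL.
Qed.

Lemma max_ideal I : is_ideal I -> ~ I 1 ->
  exists Q, [/\ prime_ideal Q, sub I Q &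
     forall a, ~ Q a -> exists q r, Q q /\ 1 = q + r * a].
Proof.
move=> HI I1.
have IS1 : forall s, s = 1 -> ~ I s by move=> s ->.
have [Q [HQ IQ QS Qmax]] := @zorn_ideal (fun s => s = 1) I erefl HI IS1.
exists Q; split => //.
- apply: (max_prime (S := fun s => s = 1)) => //.
  by move=> a b -> ->; rewrite mul1r.
- move=> a Qa; have [s [q [r [-> Hq E]]]] := Qmax a Qa; by exists q, r.
Qed.

Hypothesis HR : multiplication_ring R.

Lemma min_prime_below Q : prime_ideal Q -> exists P0, minimal_prime P0 /\ sub P0 Q.
Proof.
move=> HQ; have [[Q0 QD QL QR] Q1 Qm] := HQ.
pose P0 := fun x => forall P, prime_ideal P -> sub P Q -> P x.
have P0Q : sub P0 Q by move=> x Hx; apply: Hx.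
have HP0 : prime_ideal P0.
  split.
  - split.
    + by move=> P [[] ] .
    + by move=> x y Hx Hy P HP PQ; have [[_ D _ _] _ _] := HP; apply: D; [apply: Hx|apply: Hy].
    + by move=> r x Hx P HP PQ; have [[_ _ L _] _ _] := HP; apply: L; apply: Hx.
    + by move=> r x Hx P HP PQ; have [[_ _ _ L] _ _] := HP; apply: L; apply: Hx.
  - by move=> h; apply: Q1; apply: h.
  - move=> a b Hab; apply: NNPP => H.
    have [P1 [HP1 [P1Q P1a]]] : exists P1, prime_ideal P1 /\ sub P1 Q /\ ~ P1 a.
      apply: NNPP => H'; apply: H; left => P HP PQ; apply: NNPP => Pa; apply: H'.
      by exists P.
    have [P2 [HP2 [P2Q P2b]]] : exists P2, prime_ideal P2 /\ sub P2 Q /\ ~ P2 b.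
      apply: NNPP => H'; apply: H; right => P HP PQ; apply: NNPP => Pb; apply: H'.
      by exists P.
    have [I1 _ Pm1] := HP1; have [I2 _ Pm2] := HP2.
    case: (chain HR HP1 HP2 (And4 Q0 QD QL QR) Q1 P1Q P2Q) => h.
    + by case: (Pm1 _ _ (Hab _ HP1 P1Q)) => // /h.
    + by case: (Pm2 _ _ (Hab _ HP2 P2Q)) => // /h.
exists P0; split => //; split => // Q' HQ' Q'P0 x Hx.
by apply: Hx => // y /Q'P0; apply: P0Q.
Qed.

Lemma Kp_ideal P : prime_ideal P -> is_ideal (Kp P).
Proof.
move=> [[P0 _ PL _] P1 Pm]; split.
- by exists 1; rewrite mulr0.
- move=> x y [w [Pw Hw]] [w' [Pw' Hw']]; exists (w * w'); split.
  + by case/Pm.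
  + by rewrite mulrDr mulrAC Hw mul0r -mulrA Hw' mulr0 addr0.
- by move=> r x [w [Pw Hw]]; exists w; split => //; rewrite mulrCA Hw mulr0.
- by move=> r x [w [Pw Hw]]; exists w; split => //; rewrite mulrA Hw mul0r.
Qed.

Lemma Kp_sub P : prime_ideal P -> sub (Kp P) P.
Proof.
move=> [[P0 _ _ _] _ Pm] x [w [Pw Hw]].
have : P (w * x) by rewrite Hw.
by case/Pm => // /Pw.
Qed.

Lemma Kp_ext P P' r : (forall x, P x <-> P' x) -> Kp P r -> Kp P' r.
Proof. by move=> E [w [Pw Hw]]; exists w; split => // /E. Qed.

Lemma Kp_mono P P' r : sub P P' -> Kp P' r -> Kp P r.
Proof. by move=> E [w [Pw Hw]]; exists w; split => // /E. Qed.

Lemma pow_lemma P x : minimal_prime P -> P x -> exists w n, ~ P w /\ w * x ^+ n = 0.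
Proof.
move=> [HP Pmin] Px; apply: NNPP => H.
have [[P0 _ _ _] P1 Pm] := HP.
pose S := fun s => exists w n, ~ P w /\ s = w * x ^+ n.
have SM : forall a b, S a -> S b -> S (a * b).
  move=> a b [w [n [Pw ->]]] [w' [n' [Pw' ->]]]; exists (w * w'), (n + n')%N.
  split; first by case/Pm.
  by rewrite exprD mulrACA.
have S1 : S 1 by exists 1, 0%N; rewrite expr0 mulr1.
have HI : is_ideal (fun y : R => y = 0).
  split => //.
  - by move=> ? ? -> ->; rewrite addr0.
  - by move=> ? ? ->; rewrite mulr0.
  - by move=> ? ? ->; rewrite mul0r.
have IS : forall s, S s -> ~ (s = 0).
  by move=> s [w [n [Pw ->]]] E; apply: H; exists w, n.
have [Q [HQ _ QS Qmax]] := zorn_ideal S1 HI IS.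
have PQ : prime_ideal Q by apply: (max_prime SM S1).
have QP : sub Q P.
  move=> y Qy; apply: NNPP => Py; apply: (QS y) => //.
  by exists y, 0%N; rewrite expr0 mulr1.
apply: (QS x); first by exists 1, 1%N; rewrite expr1 mul1r.
exact: (Pmin Q PQ QP).
Qed.

Lemma V_lemma P Q : minimal_prime P -> prime_ideal Q -> sub (Kp P) Q -> sub P Q.
Proof.
move=> HP [_ Q1 Qm] KQ x Px.
have [w [n [Pw Hw]]] := pow_lemma HP Px.
have : Q (x ^+ n) by apply: KQ; exists w.
elim: n {Hw} => [|n IH]; first by rewrite expr0.
by rewrite exprS => /Qm [].
Qed.

Lemma Z1' P Q : prime_ideal P -> is_ideal Q -> ~ Q 1 -> sub P Q -> sub (Kp P) (Kp Q).
Proof.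
move=> HP HQ Q1 PQ r Kr.
case: (classic (sub Q P)) => [QP|nQP].
  by apply: Kp_mono Kr.
have [q [Qq Pq]] : exists q, Q q /\ ~ P q.
  apply: NNPP => H; apply: nQP => y Qy; apply: NNPP => Py; apply: H; by exists y.
have Pr := Kp_sub HP Kr.
have [a Qa Ea] := M1 HR HP HQ PQ Qq Pq Pr.
exists (1 - a); split; first exact: ideal_1B.
by rewrite mulrBl mul1r -Ea subrr.
Qed.

Lemma Z1 r : (forall P, minimal_prime P -> Kp P r) -> r = 0.
Proof.
move=> H.
have HA : is_ideal (fun w => w * r = 0).
  split.
  - by rewrite mul0r.
  - by move=> x y Hx Hy; rewrite mulrDl Hx Hy addr0.
  - by move=> c x Hx; rewrite -mulrA Hx mulr0.
  - by move=> c x Hx; rewrite mulrAC Hx mul0r.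
case: (classic ((1 : R) * r = 0)) => [|N1]; first by rewrite mul1r.
have [Q [HQ AQ Qmax]] := max_ideal HA N1.
have [P0 [HP0 P0Q]] := min_prime_below HQ.
have [QI Q1 _] := HQ.
have [w [Qw Hw]] := Z1' (proj1 HP0) QI Q1 P0Q (H _ HP0).
by exfalso; exact: Qw (AQ _ Hw).
Qed.

Lemma Z2 P P0 : minimal_prime P -> minimal_prime P0 -> ~ (forall x, P x <-> P0 x) ->
  exists a k, [/\ Kp P0 a, Kp P k & 1 = a + k].
Proof.
move=> HP HP0 NE.
have HB := isum_ideal (Kp_ideal (proj1 HP0)) (Kp_ideal (proj1 HP)).
case: (classic (isum (Kp P0) (Kp P) 1)) => [[a [k [Ha Hk E]]]|N1].
  by exists a, k.
have [Q [HQ BQ _]] := max_ideal HB N1.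
have PQ : sub P Q.
  apply: V_lemma => // y Hy; apply: BQ; apply: isum_r => //.
  exact: Kp_ideal (proj1 HP0).
have P0Q : sub P0 Q.
  apply: V_lemma => // y Hy; apply: BQ; apply: isum_l => //.
  exact: Kp_ideal (proj1 HP).
have [QI Q1 _] := HQ.
case: (chain HR (proj1 HP) (proj1 HP0) QI Q1 PQ P0Q) => h; exfalso; apply: NE => x; split.
- exact: h.
- exact: ((proj2 HP0) P (proj1 HP) h x).
- exact: ((proj2 HP) P0 (proj1 HP0) h x).
- exact: h.
Qed.



Lemma KEY Q : finitely_many_minimal_primes R -> prime_ideal Q ->
  exists t, ~ Q t /\ forall y, Kp Q y -> t * y = 0.
Proof.
move=> [n [Ps HPs]] HQ.
have [P0 [HP0 P0Q]] := min_prime_below HQ.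
have [QI Q1 _] := HQ.
pose good l := exists k, Kp (Ps l) k /\ exists a, Kp P0 a /\ 1 = a + k.
pose k l := if pselect (good l) is left h then sval (cid h) else 1.
have kspec l : exists a, Kp P0 a /\ k l = 1 - a.
  rewrite /k; case: pselect => [h|_]; last first.
    by exists 0; split; [case: (Kp_ideal (proj1 HP0)) | rewrite subr0].
  case: (cid h) => /= x [_ [a [Ha E]]]; exists a; split => //.
  by rewrite E addrC addKr.
have kgood l : good l -> Kp (Ps l) (k l).
  rewrite /k => g; case: pselect => [h|//].
  by case: (cid h) => /= x [].
have HK0 := Kp_ideal (proj1 HP0).
have tspec : forall m, exists a, Kp P0 a /\ \prod_(l < m) k l = 1 - a.
  elim => [|m [a [Ha E]]].
    by rewrite big_ord0; exists 0; split; [case: HK0 | rewrite subr0].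
  rewrite big_ord_recr /= E; have [b [Hb ->]] := kspec m.
  exists (a + b - a * b); split.
    have [_ D _ R'] := HK0; apply: (ideal_subB HK0); first by apply: D.
    exact: R'.
  by ring.
pose t := \prod_(l < n) k l.
exists t; split.
  have [a [Ha Et]] := tspec n; rewrite /t Et.
  apply: ideal_1B => //; apply: P0Q; move: Ha; apply: (Kp_sub (proj1 HP0)).
move=> y Ky; apply: Z1 => P HP.
case: (classic (forall x, P x <-> P0 x)) => [E|NE].
  apply: (Kp_ext (P := P0)); first by move=> x; split => /E.
  case: HK0 => _ _ L _; apply: L.
  by apply: Kp_mono Ky.
have [i [ltin Ei]] := HPs P HP.
have [a [c [Ha Hc E1]]] := Z2 HP HP0 NE.
have gi : good i.
  exists c; split; last by exists a.
  by apply: Kp_ext Hc.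
have Kki : Kp P (k i) by apply: (Kp_ext (P := Ps i)) => [x|]; [split => /Ei|apply: kgood].
have [_ _ _ R'] := Kp_ideal (proj1 HP).
apply: (R').
rewrite /t (bigD1 (Ordinal ltin)) //=.
exact: R'.
Qed.

End RingLemmas2.


Section ModLemmas.
Variables (R : comPzRingType) (M : lmodType R).
Implicit Types I J A B P Q X Y : R -> Prop.
Local Notation smul I := (@ideal_smul _ M I).
Local Notation subm N := (@is_submodule _ M N).

Lemma smul_sub I (N : M -> Prop) : subm N ->
  (forall r v, I r -> N (r *: v)) -> forall m, smul I m -> N m.
Proof. by move=> HN H m Hm; apply: Hm. Qed.

Lemma smul_mono I I' (m : M) : sub I I' -> smul I m -> ideal_smul I' m.
Proof.
move=> II'; apply: smul_sub; first exact: smul_submodule.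
by move=> r v Ir; apply: smul_gen; apply: II'.
Qed.

Lemma smul_assoc A B (m : M) : (forall m : M, smul B m) ->
  smul A m -> smul (ideal_mul A B) m.
Proof.
move=> HB; apply: smul_sub; first exact: smul_submodule.
move=> r v Ar.
pose N := fun v : M => smul (ideal_mul A B) (r *: v).
have HN : subm N.
  have [S0 SD SZ] := smul_submodule M (ideal_mul A B).
  split; rewrite /N.
  - by rewrite scaler0.
  - by move=> x y Hx Hy; rewrite scalerDr; apply: SD.
  - by move=> s x Hx; rewrite scalerA mulrC -scalerA; apply: SZ.
apply: (smul_sub HN _ (HB v)) => s w Bs; rewrite /N scalerA.
by apply: smul_gen; apply: ideal_mul_prod.
Qed.

Lemma smul_kill (t : R) I (m : M) : (forall r, I r -> t * r = 0) ->
  smul I m -> t *: m = 0.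
Proof.
move=> H; apply: (smul_sub (N := fun m : M => t *: m = 0)).
  split.
  - by rewrite scaler0.
  - by move=> x y Hx Hy; rewrite scalerDr Hx Hy addr0.
  - by move=> s x Hx; rewrite scalerA mulrC -scalerA Hx scaler0.
by move=> r v Ir; rewrite scalerA H // scale0r.
Qed.

Lemma smul_ann (m : M) : smul (ann M) m -> m = 0.
Proof.
apply: (smul_sub (N := fun m : M => m = 0)).
  split => //.
  - by move=> x y -> ->; rewrite addr0.
  - by move=> s x ->; rewrite scaler0.
by move=> r v Hr; apply: Hr.
Qed.

Lemma ann_ideal : is_ideal (ann M).
Proof.
split.
- by move=> v; rewrite scale0r.
- by move=> x y Hx Hy v; rewrite scalerDl Hx Hy addr0.
- by move=> r x Hx v; rewrite -scalerA Hx scaler0.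
- by move=> r x Hx v; rewrite mulrC -scalerA Hx scaler0.
Qed.

Definition cyc (x : M) : M -> Prop := fun y => exists r, y = r *: x.

Lemma cyc_submodule x : subm (cyc x).
Proof.
split.
- by exists 0; rewrite scale0r.
- by move=> ? ? [r ->] [s ->]; exists (r + s); rewrite scalerDl.
- by move=> c ? [r ->]; exists (c * r); rewrite scalerA.
Qed.

Lemma cyc_self x : cyc x x.
Proof. by exists 1; rewrite scale1r. Qed.

Lemma smul_prin I Q (x m : M) : (forall y, cyc x y <-> smul I y) -> is_ideal Q ->
  smul (ideal_mul I Q) m -> exists2 q, Q q & m = q *: x.
Proof.
move=> EI [Q0 QD QL QR].
pose N := fun m : M => exists2 q, Q q & m = q *: x.
have HN : subm N.
  split.
  - by exists 0; rewrite ?scale0r.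
  - by move=> ? ? [q Hq ->] [q' Hq' ->]; exists (q + q'); [apply: QD | rewrite scalerDl].
  - by move=> c ? [q Hq ->]; exists (c * q); [apply: QL | rewrite scalerA].
apply: (smul_sub HN) => s v Hs.
pose K := fun s => forall v : M, N (s *: v).
have HK : is_ideal K.
  split; rewrite /K.
  - by move=> w; exists 0; rewrite ?scale0r.
  - move=> a b Ha Hb w; have [q Hq Eq] := Ha w; have [q' Hq' Eq'] := Hb w.
    by exists (q + q'); [apply: QD | rewrite scalerDl Eq Eq' scalerDl].
  - move=> r a Ha w; have [q Hq Eq] := Ha w.
    by exists (r * q); [apply: QL | rewrite -scalerA Eq scalerA].
  - move=> r a Ha w; have [q Hq Eq] := Ha (r *: w).
    by exists q => //; rewrite -scalerA.
apply: (ideal_mul_min HK _ Hs) => i q Ii Qq w.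
have [c Ec] : cyc x (i *: w) by apply/EI; apply: smul_gen.
exists (q * c); first by apply: QR.
by rewrite (mulrC i q) -(scalerA q i) Ec scalerA.
Qed.

Variable f : End_R M.

Lemma f0 : f 0 = 0.
Proof. by have := efunZ f 0 0; rewrite !scale0r. Qed.

Lemma smul_f I (m : M) : smul I m -> smul I (f m).
Proof.
apply: (smul_sub (N := fun m => smul I (f m))).
  have [S0 SD SZ] := smul_submodule M I.
  split.
  - by rewrite f0.
  - by move=> x y Hx Hy; rewrite efunD; apply: SD.
  - by move=> s x Hx; rewrite efunZ; apply: SZ.
by move=> r v Ir; rewrite efunZ; apply: smul_gen.
Qed.

End ModLemmas.


Section Main.
Variables (R : comPzRingType) (M : lmodType R).
Hypothesis HR : multiplication_ring R.
Hypothesis Hfin : finitely_many_minimal_primes R.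
Hypothesis HM : multiplication_module M.
Local Notation smul I := (@ideal_smul _ M I).

Lemma endo_scalar (f : End_R M) : exists b, forall x, f x = b *: x.
Proof.
pose T := fun t => exists b, forall x : M, f (t *: x) = b *: x.
have HT : is_ideal T.
  split.
  - by exists 0 => x; rewrite !scale0r f0.
  - move=> a b [ba Ha] [bb Hb]; exists (ba + bb) => x.
    by rewrite !scalerDl efunD Ha Hb.
  - move=> r a [ba Ha]; exists (r * ba) => x.
    by rewrite -!scalerA efunZ Ha.
  - move=> r a [ba Ha]; exists (ba * r) => x.
    by rewrite -scalerA Ha scalerA.
suff [b Hb] : T 1 by exists b => x; rewrite -Hb scale1r.
apply: NNPP => T1.
have [Q [HQ TQ Qmax]] := max_ideal HT T1.
have [QI Q1 Qm] := HQ.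
have Ix (x : M) : exists I, is_ideal I /\ forall m, cyc x m <-> smul I m.
  exact: HM (cyc_submodule x).
have IT (x : M) I : (forall m, cyc x m <-> smul I m) -> sub I T.
  move=> EI a Ia.
  have [s Es] : cyc x (f x).
    by apply/EI; apply: smul_f; apply/EI; apply: cyc_self.
  exists (s * a) => y.
  have [c Ec] : cyc x (a *: y) by apply/EI; apply: smul_gen.
  by rewrite Ec efunZ Es scalerA (mulrC c s) -(scalerA s c) -Ec scalerA.
have IQ (x : M) I : (forall m, cyc x m <-> smul I m) -> sub I Q.
  move=> EI a Ia; apply: NNPP => Qa.
  have [q [r [Qq E]]] := Qmax a Qa.
  have : T (1 - q).
    have -> : 1 - q = r * a by rewrite E addrC addKr.
    by have [_ _ L _] := HT; apply: L; apply: (IT x I EI).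
  by move/TQ; apply: ideal_1B.
have MQ (m : M) : smul Q m.
  have [I [HI EI]] := Ix m.
  by apply: (smul_mono (IQ m I EI)); apply/EI; apply: cyc_self.
have Mtors (x : M) : exists u, ~ Q u /\ u *: x = 0.
  have [I [HI EI]] := Ix x.
  have : smul (ideal_mul I Q) x.
    by apply: smul_assoc => //; apply/EI; apply: cyc_self.
  case/(smul_prin EI QI) => q Qq Eq.
  exists (1 - q); split; first exact: ideal_1B.
  by rewrite scalerBl scale1r -Eq subrr.
have MT (m : M) : smul T m.
  have [I [HI EI]] := Ix m.
  by apply: (smul_mono (IT m I EI)); apply/EI; apply: cyc_self.
have JT : sub (ann M) T.
  by move=> j Hj; exists 0 => x; rewrite Hj f0 scale0r.
have Hann := @ann_ideal _ M.
have JK : sub (ann M) (Kp Q).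
  have [X [HX EX]] := @HR _ _ HT Hann JT.
  have XJ : sub X (ann M).
    move=> x0 Hx0 v; apply: smul_ann.
    apply: (smul_mono (I := ideal_mul X T)); first by move=> z /EX.
    by apply: smul_assoc => //; apply: smul_gen.
  have JJT : sub (ann M) (ideal_mul (ann M) T).
    by move=> z /EX; apply: ideal_mul_mono.
  move=> j Hj; have [t Tt Et] := idem_lemma HR Hann HT JJT Hj.
  exists (1 - t); split; first by apply: ideal_1B => //; apply: TQ.
  by rewrite mulrBl mul1r -Et subrr.
have IK (x : M) I : (forall m, cyc x m <-> smul I m) -> sub I (Kp Q).
  move=> EI i Ii; have [u [Qu Eu]] := Mtors x.
  have : ann M (u * i).
    move=> v; have [c Ec] : cyc x (i *: v) by apply/EI; apply: smul_gen.
    by rewrite -scalerA Ec scalerA mulrC -scalerA Eu scaler0.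
  move/JK => [w [Qw Ew]]; exists (w * u); split.
    by case/Qm.
  by rewrite -mulrA.
have [t [Qt Kt]] := KEY HR Hfin HQ.
apply: Qt; apply: TQ; apply: JT => x.
have [I [HI EI]] := Ix x.
apply: (smul_kill (I := I)); last by apply/EI; apply: cyc_self.
by move=> r Ir; apply: Kt; apply: (IK x I EI).
Qed.

End Main.


Section Phi.
Variables (R : comPzRingType) (M : lmodType R).

Lemma phi_Z (r : R) : forall (s : R) (x : M), r *: (s *: x) = s *: (r *: x).
Proof. by move=> s x; rewrite !scalerA mulrC. Qed.

Definition phi_fun (r : R) : End_R M := @Endo R M (fun x => r *: x) (scalerDr r) (phi_Z r).

Lemma phi_zmod : zmod_morphism phi_fun.
Proof. by move=> a b; apply: endo_ext => x /=; rewrite scalerBl. Qed.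

Lemma phi_monoid : monoid_morphism phi_fun.
Proof.
split; first by apply: endo_ext => x /=; rewrite scale1r.
by move=> a b; apply: endo_ext => x /=; rewrite scalerA.
Qed.

End Phi.

HB.instance Definition _ (R : comPzRingType) (M : lmodType R) :=
  GRing.isZmodMorphism.Build R (End_R M) (@phi_fun R M) (@phi_zmod R M).
HB.instance Definition _ (R : comPzRingType) (M : lmodType R) :=
  GRing.isMonoidMorphism.Build R (End_R M) (@phi_fun R M) (@phi_monoid R M).

Definition phi (R : comPzRingType) (M : lmodType R) : {rmorphism R -> End_R M} :=
  @phi_fun R M.

Theorem corollary2p6 (R : comPzRingType) (M : lmodType R) :
  multiplication_ring R ->
  finitely_many_minimal_primes R ->
  multiplication_module M ->
  [/\ multiplication_ring (End_R M),
      iso_to_quotient (End_R M) (ann M) &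
      multiplication_module (M_over_End M) /\ faithful (M_over_End M)].
Proof.
move=> HR Hfin HM.
have surj : forall g : End_R M, exists r, phi M r = g.
  move=> g; have [b Hb] := endo_scalar HR Hfin HM g.
  by exists b; apply: endo_ext => x /=; rewrite Hb.
have phiE : forall r (x : M), (phi M r : End_R M) x = r *: x by [].
split.
-
  move=> I J [I0 ID IL IR] [J0 JD JL JR] JI.
  pose I0' := fun r => I (phi M r).
  pose J0' := fun r => J (phi M r).
  have HI0 : is_ideal I0'.
    split; rewrite /I0'.
    - by rewrite rmorph0.
    - by move=> x y Hx Hy; rewrite rmorphD; apply: ID.
    - by move=> r x Hx; rewrite rmorphM; apply: IL.
    - by move=> r x Hx; rewrite rmorphM; apply: IR.
  have HJ0 : is_ideal J0'.
    split; rewrite /J0'.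
    - by rewrite rmorph0.
    - by move=> x y Hx Hy; rewrite rmorphD; apply: JD.
    - by move=> r x Hx; rewrite rmorphM; apply: JL.
    - by move=> r x Hx; rewrite rmorphM; apply: JR.
  have [X [[X0 XD XL XR] EX]] := HR I0' J0' HI0 HJ0 (fun x => JI (phi M x)).
  pose I' := fun g : End_R M => exists2 x, X x & g = phi M x.
  exists I'; split.
    split.
    - by exists 0; rewrite ?rmorph0.
    - by move=> _ _ [x Hx ->] [y Hy ->]; exists (x + y); [apply: XD | rewrite rmorphD].
    - move=> g _ [x Hx ->]; have [r <-] := surj g.
      by exists (r * x); [apply: XL | rewrite rmorphM].
    - move=> g _ [x Hx ->]; have [r <-] := surj g.
      by exists (x * r); [apply: XR | rewrite rmorphM].
  move=> g; split.
  + move=> Jg; have [r Er] := surj g.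
    have : J0' r by rewrite /J0' Er.
    move/EX; rewrite -Er.
    pose K := fun r => ideal_mul I' I (phi M r).
    have HK : is_ideal K.
      have [K0 KD KL KR] := ideal_mul_ideal I' I.
      split; rewrite /K.
      - by rewrite rmorph0.
      - by move=> x y Hx Hy; rewrite rmorphD; apply: KD.
      - by move=> c x Hx; rewrite rmorphM; apply: KL.
      - by move=> c x Hx; rewrite rmorphM; apply: KR.
    apply: (ideal_mul_min HK) => x i Xx Ii; rewrite /K rmorphM.
    by apply: ideal_mul_prod => //; exists x.
  + apply: ideal_mul_min; first by split.
    move=> a b [x Xx ->] Ib; have [r Er] := surj b.
    rewrite -Er -rmorphM; apply/EX; apply: ideal_mul_prod => //.
    by rewrite /I0' Er.
-
  exists (phi M); split => // r; split.
  + move=> E v; have := congr1 (fun g : End_R M => g v) E; by rewrite phiE.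
  + by move=> H; apply: endo_ext => x; rewrite phiE H.
- split.
  +
    move=> N [N0 ND NZ].
    have HN : @is_submodule _ M N.
      split; [exact: N0 | exact: ND | move=> r x Nx; exact: (NZ (phi M r) x Nx)].
    have [I [HI EI]] := HM N HN.
    pose IE := fun g : End_R M => forall m : M, N (g m).
    exists IE; split.
      split; rewrite /IE.
      - by move=> m.
      - by move=> g h Hg Hh m; apply: ND.
      - by move=> h g Hg m; apply: (NZ h (g m)).
      - by move=> h g Hg m; apply: Hg.
    move=> m; split.
    * move/EI => Hm.
      have HS : @is_submodule _ M (fun m : M => @ideal_smul _ (M_over_End M) IE m).
        have [S0 SD SZ] := smul_submodule (M_over_End M) IE.
        split => // r x Hx; exact: (SZ (phi M r) x Hx).
      apply: (Hm _ HS) => r v Ir.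
      have -> : r *: v = (phi M r : End_R M) *: (v : M_over_End M) by [].
      apply: smul_gen => m'.
      by rewrite phiE; apply/EI; apply: smul_gen.
    * move=> Hm; apply: Hm => // g v IEg; exact: IEg.
  +
    move=> g Hg; apply: endo_ext => x; exact: Hg x.
Qed.
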